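(* Let $G$ be a graph, $r \ge 1$, $L_S=(s_1,\dots,s_n)$ a subordering of $S \subseteq V(G)$, $v \in V(G)\setminus S$ and $s \in S$. Then $s \notin \mathrm{bp}(G,L_S,v)$ if and only if for all $u \in V(G)$, $$\mathrm{Wreach}_r(G,\mathrm{placebefore}(L_S,s,v),u)=\mathrm{Wreach}_r(G,\mathrm{placeafter}(L_S,s,v),u).$$
   Context: All graphs are finite, undirected, without loops. A path has length equal to its number of vertices minus one. A subordering $L_S$ is a linear ordering of $S\subseteq V(G)$; $\preceq_{L_S}$ means precedes or equal. For a subordering $L_S$ and $u,w\in V(G)$, $u\in\mathrm{Wreach}_r(G,L_S,w)$ iff either $u=w$, or $u\in S$ and there is a path $P$ of length at most $r$ between $u$ and $w$ with $u\preceq_{L_S} x$ for all $x\in V(P)\cap S$. For $L_S=(s_1,\dots,s_n)$ and $v\notin S$: $\mathrm{placeafter}(L_S,s_i,v)=(s_1,\dots,s_i,v,s_{i+1},\dots,s_n)$ and $\mathrm{placebefore}(L_S,s_i,v)=(s_1,\dots,s_{i-1},v,s_i,\dots,s_n)$, both suborderings of $S\cup\{v\}$. A vertex $s\in S$ is a breakpoint of $v$ if $\mathrm{Wreach}_r(G,\mathrm{placebefore}(L_S,s,v),v)\ne\mathrm{Wreach}_r(G,\mathrm{placeafter}(L_S,s,v),v)$; $\mathrm{bp}(G,L_S,v)\subseteq S$ denotes the set of breakpoints of $v$. *)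

(* Defs.v *)
From mathcomp Require Import all_boot.
Set Implicit Arguments. Unset Strict Implicit. Unset Printing Implicit Defensive.

(* A simple graph on a finite vertex type T is a symmetric irreflexive
   relation e.  A subordering L_S of S is a duplicate-free sequence L
   (S = the elements of L); x precedes-or-equals y iff index x L <= index y L. *)

Definition is_gpath (T : eqType) (e : rel T) (p : seq T) : bool :=
  if p is x :: q then path e x q && uniq p else false.

Definition in_wreach (T : eqType) (e : rel T) (r : nat) (L : seq T) (w u : T) : Prop :=
  u = w \/
  (u \in L /\
   exists p : seq T,
     [/\ is_gpath e (u :: p), last u p = w, size p <= r &
         forall x, x \in u :: p -> x \in L -> index u L <= index x L]).

Definition wreach_eq (T : eqType) (e : rel T) (r : nat) (L1 L2 : seq T) (w : T) : Prop :=
  forall u, in_wreach e r L1 w u <-> in_wreach e r L2 w u.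

Definition placeafter (T : eqType) (L : seq T) (s v : T) : seq T :=
  take (index s L).+1 L ++ v :: drop (index s L).+1 L.

Definition placebefore (T : eqType) (L : seq T) (s v : T) : seq T :=
  take (index s L) L ++ v :: drop (index s L) L.

Definition is_breakpoint (T : eqType) (e : rel T) (r : nat) (L : seq T) (v s : T) : Prop :=
  s \in L /\ ~ wreach_eq e r (placebefore L s v) (placeafter L s v) v.

(* Main.v *)
Require Import Defs.
From mathcomp Require Import all_boot.
From mathcomp Require Import zify.
Set Implicit Arguments. Unset Strict Implicit.

Lemma idx_split (T : eqType) (A B : seq T) a b x :
  a \notin A -> b \notin A ->
  index x (A ++ a :: b :: B) =
  if x \in A then index x A else if x == a then size A
  else if x == b then (size A).+1 else (size A).+2 + index x B.
Proof.
move=> Ha Hb; rewrite index_cat; case: ifP => // HxA /=.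
rewrite [a == x]eq_sym [b == x]eq_sym.
case: (x == a); first by rewrite addn0.
case: (x == b); first by rewrite addn1.
lia.
Qed.

Lemma idx_swap (T : eqType) (A B : seq T) a b u x :
  a \notin A -> b \notin A -> a != b -> (u != a) || (x != b) ->
  index u (A ++ a :: b :: B) <= index x (A ++ a :: b :: B) ->
  index u (A ++ b :: a :: B) <= index x (A ++ b :: a :: B).
Proof.
move=> Ha Hb Hab Hux; rewrite !idx_split //.
have Hi : forall y, y \in A -> index y A < size A by move=> y; rewrite index_mem.
case: (boolP (u \in A)) => HuA; case: (boolP (x \in A)) => HxA //.
- by move=> _; case: ifP => _; [|case: ifP => _]; have := Hi u HuA; lia.
- by move: (Hi x HxA); case: ifP => _; [|case: ifP => _]; lia.
move: Hux; case Eua: (u == a); case Eub: (u == b); case Exa: (x == a);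
  case Exb: (x == b) => //=; try lia;
  by [move: Eua Eub => /eqP -> /eqP E; rewrite E eqxx in Hab
     | move: Exa Exb => /eqP -> /eqP E; rewrite E eqxx in Hab].
Qed.

Lemma gpath_prefix (T : eqType) (e : rel T) x p1 p2 :
  is_gpath e (x :: p1 ++ p2) -> is_gpath e (x :: p1).
Proof.
rewrite /is_gpath cat_path -cat_cons cat_uniq.
by case/andP=> /andP[-> _] /andP[-> _].
Qed.

Lemma gpath_rev (T : eqType) (e : rel T) (He : symmetric e) x p :
  is_gpath e (x :: p) -> is_gpath e (rev (x :: p)).
Proof.
move=> /andP[Hp Hu].
have Hr : rev (x :: p) = last x p :: rev (belast x p) by rewrite lastI rev_rcons.
rewrite Hr; apply/andP; split.
  by rewrite rev_path (@eq_path _ _ e) // => a b; rewrite /= He.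
by rewrite -Hr rev_uniq.
Qed.

Section Main.
Variables (T : eqType) (e : rel T) (He_sym : symmetric e) (r : nat)
  (A B : seq T) (v s : T).
Hypotheses (HvA : v \notin A) (HsA : s \notin A) (Hvs : v != s).
Let L1 := A ++ v :: s :: B.
Let L2 := A ++ s :: v :: B.

Lemma memL x : (x \in L1) = (x \in L2).
Proof. by rewrite /L1 /L2 !mem_cat !inE; case: (x == v); case: (x == s); rewrite ?orbT. Qed.

Lemma I12 u x : (u != v) || (x != s) ->
  index u L1 <= index x L1 -> index u L2 <= index x L2.
Proof. by apply: idx_swap. Qed.

Lemma I21 u x : (u != s) || (x != v) ->
  index u L2 <= index x L2 -> index u L1 <= index x L1.
Proof. by apply: idx_swap; rewrite // eq_sym. Qed.

Lemma I3 x : index v L1 <= index x L1 -> index s L2 <= index x L2.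
Proof.
rewrite /L1 /L2 !idx_split // (negbTE HvA) (negbTE HsA) !eqxx.
have Hi : x \in A -> index x A < size A by rewrite index_mem.
case: (x \in A) Hi => [H|_]; first by have := H isT; lia.
by case: (x == s); case: (x == v) => /=; lia.
Qed.

Hypothesis Hb : ~ ~ wreach_eq e r L1 L2 v.

Lemma KEY : ~ in_wreach e r L2 v s.
Proof.
move=> H; apply: Hb => Heq.
case: ((Heq s).2 H) => [Hsv|[_ [q [_ Hl _ Hm]]]].
  by move: Hvs; rewrite Hsv eqxx.
have Hv1 : v \in s :: q by rewrite -Hl mem_last.
have Hv2 : v \in L1 by rewrite /L1 mem_cat inE eqxx orbT.
have := Hm v Hv1 Hv2.
by rewrite /L1 !idx_split // (negbTE HvA) (negbTE HsA) !eqxx eq_sym (negbTE Hvs); lia.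
Qed.

Lemma main_eq w u : in_wreach e r L1 w u <-> in_wreach e r L2 w u.
Proof.
split.
- case=> [->|[Hu [p [Hg Hl Hsz Hm]]]]; first by left.
  right; split; first by rewrite -memL.
  case: (eqVneq u v) => [Huv|Huv].
  + subst u; case: (boolP (s \in v :: p)) => Hsp.
    * exfalso; apply: KEY.
      have Hsp' : s \in p by move: Hsp; rewrite inE eq_sym (negbTE Hvs).
      move: Hg Hsz Hm; case/path.splitP: Hsp' => p1 p2 Hg Hsz Hm.
      have HQ := gpath_prefix Hg.
      right; split; first by rewrite /L2 mem_cat inE eqxx orbT.
      exists (rcons (rev p1) v); split.
      -- by have := gpath_rev He_sym HQ; rewrite rev_cons rev_rcons.
      -- by rewrite last_rcons.
      -- by move: Hsz; rewrite size_cat !size_rcons size_rev; lia.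
      -- move=> x Hx Hx2; apply: I3; apply: Hm; last by rewrite memL.
         move: Hx; rewrite -rcons_cons mem_rcons !inE mem_rev mem_cat mem_rcons !inE.
         by case/orP=> [->|/orP[->|->]]; rewrite ?orbT.
    * exists p; split => // x Hx Hx2; apply: I12; last by apply: Hm => //; rewrite memL.
      by apply/orP; right; apply: contraNneq Hsp => <-.
  + exists p; split => // x Hx Hx2; apply: I12; last by apply: Hm => //; rewrite memL.
    by rewrite Huv.
- case=> [->|[Hu [p [Hg Hl Hsz Hm]]]]; first by left.
  case: (eqVneq u s) => [Hus|Hus].
  + subst u; case: (boolP (v \in s :: p)) => Hvp.
    * exfalso; apply: KEY.
      have Hvp' : v \in p by move: Hvp; rewrite inE (negbTE Hvs).
      move: Hg Hsz Hm; case/path.splitP: Hvp' => p1 p2 Hg Hsz Hm.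
      right; split => //.
      exists (rcons p1 v); split.
      -- exact: gpath_prefix Hg.
      -- by rewrite last_rcons.
      -- by move: Hsz; rewrite size_cat; lia.
      -- by move=> x Hx Hx2; apply: Hm => //; rewrite -cat_cons mem_cat Hx.
    * right; split; first by rewrite memL.
      exists p; split => // x Hx Hx2; apply: I21; last by apply: Hm => //; rewrite -memL.
      by apply/orP; right; apply: contraNneq Hvp => <-.
  + right; split; first by rewrite memL.
    exists p; split => // x Hx Hx2; apply: I21; last by apply: Hm => //; rewrite -memL.
    by rewrite Hus.
Qed.

End Main.

Theorem lemma4 (T : finType) (e : rel T) (He_sym : symmetric e)
  (He_irr : irreflexive e) (r : nat) (Hr : 1 <= r) (L : seq T)
  (HL : uniq L) (v s : T) (Hv : v \notin L) (Hs : s \in L) :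
  ~ is_breakpoint e r L v s <->
  (forall u : T, wreach_eq e r (placebefore L s v) (placeafter L s v) u).
Proof.
split; last first.
  by move=> H [_ Hn]; apply: Hn; apply: H.
move=> Hnb.
set A := take (index s L) L; set B := drop (index s L).+1 L.
have Hi : index s L < size L by rewrite index_mem.
have Hd : drop (index s L) L = s :: B by rewrite (drop_nth s) // nth_index.
have Ht : take (index s L).+1 L = rcons A s by rewrite (take_nth s) // nth_index.
have HLd : L = A ++ s :: B by rewrite -Hd cat_take_drop.
have HsA : s \notin A.
  by move: HL; rewrite {1}HLd cat_uniq => /and3P[_ + _]; apply: contra => H;
     apply/hasP; exists s => //; rewrite inE eqxx.
have HvA : v \notin A by apply: contra Hv; rewrite HLd mem_cat => ->.
have Hvs : v != s by apply: contraNneq Hv => ->.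
have E1 : placebefore L s v = A ++ v :: s :: B by rewrite /placebefore Hd.
have E2 : placeafter L s v = A ++ s :: v :: B by rewrite /placeafter Ht cat_rcons.
rewrite E1 E2 => u w; apply: main_eq => //.
by move=> Hn; apply: Hnb; split => //; rewrite E1 E2.
Qed.
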